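(* Fix integers $1\le j<k$ and constants $0<\delta<1/6$ and $c>0$. Let $\varepsilon=\varepsilon(n)$ satisfy $\varepsilon\to0$, $\varepsilon^3n^j\to\infty$, $\varepsilon^2n^{1-2\delta}\to\infty$, let $p=(1+\varepsilon)p_0$ with $p_0=\frac{1}{(\binom{k}{j}-1)\binom{n}{k-j}}$, and let $\varepsilon_*=\varepsilon_*(n)$ satisfy $n^{-1/2+\delta}\ll\varepsilon_*\ll\varepsilon$. Let $\mathcal{T}_*$ be the Galton–Watson branching process starting from one individual in which each individual independently has $\left(\binom{k}{j}-1\right)\cdot Z$ children, where $Z\sim\mathrm{Bi}\!\left((1-\varepsilon_* )\binom{n}{k-j},p\right)$. Let $x:=(j-1+\delta+c)\varepsilon^{-1}\log n$ and let $|\mathcal{T}_*(x)|$ be the size of generation $x$ of $\mathcal{T}_*$. Then, for $n$ sufficiently large, $\Pr\big(|\mathcal{T}_*(x)|\ge n^{j-1+\delta}\big)\ge\varepsilon/n^{c}$.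
   Context: Floors and ceilings are omitted where irrelevant (e.g. $x$ and $(1-\varepsilon_* )\binom{n}{k-j}$ are rounded to integers). The notation $a\cdot Z$ means the random variable taking value $ai$ with probability $\Pr(Z=i)$. *)

(* Defs.v *)
From Stdlib Require Import Reals Lra ZArith.
From Coquelicot Require Import Coquelicot.
Open Scope R_scope.

Fixpoint binom (n k : nat) : nat :=
  match n, k with
  | _, O => 1%nat
  | O, S _ => 0%nat
  | S n', S k' => (binom n' k' + binom n' (S k'))%nat
  end.

Definition binom_pmf (N : nat) (p : R) (i : nat) : R :=
  INR (binom N i) * p ^ i * (1 - p) ^ (N - i).

Definition offspring_pmf (a N : nat) (p : R) (i : nat) : R :=
  sum_f_R0 (fun z => if Nat.eqb (a * z) i then binom_pmf N p z else 0) N.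

Definition conv (f g : nat -> R) (n : nat) : R :=
  sum_f_R0 (fun i => f i * g (n - i)%nat) n.

Fixpoint convpow (f : nat -> R) (m : nat) : nat -> R :=
  match m with
  | O => fun n => if Nat.eqb n 0 then 1 else 0
  | S m' => conv f (convpow f m')
  end.

(* Since each
   individual has at most a*N children, generation t has at most (a*N)^t
   individuals, so the sum over the previous generation size is exact. *)
Fixpoint gw_gen (a N : nat) (p : R) (t : nat) : nat -> R :=
  match t with
  | O => fun n => if Nat.eqb n 1 then 1 else 0
  | S t' => fun n =>
      sum_f_R0 (fun m => gw_gen a N p t' m * convpow (offspring_pmf a N p) m n)
               ((a * N) ^ t')
  end.

Definition gw_tail (a N : nat) (p : R) (t : nat) (y : R) : R :=
  sum_f_R0 (fun i => if Rle_dec y (INR i) then gw_gen a N p t i else 0)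
           ((a * N) ^ t).

(* Main.v *)
Require Import Defs.
From Stdlib Require Import Reals Lra Lia ZArith.
From Coquelicot Require Import Coquelicot.
Open Scope R_scope.

Lemma sum_zero (f : nat -> R) n : (forall i, (i <= n)%nat -> f i = 0) -> sum_f_R0 f n = 0.
Proof.
  intros H; induction n as [|n IH]; simpl.
  - apply H; lia.
  - rewrite IH; [rewrite H; [ring|lia]|]. intros; apply H; lia.
Qed.

Lemma sum_supp (f : nat -> R) K K' : (forall i, (K < i)%nat -> f i = 0) -> (K <= K')%nat ->
  sum_f_R0 f K' = sum_f_R0 f K.
Proof.
  intros H HK; induction HK as [|K' HK IH]; [reflexivity|].
  simpl; rewrite IH, (H (S K')); [ring|lia].
Qed.

Lemma sum_mult_l c (f : nat -> R) n : sum_f_R0 (fun i => c * f i) n = c * sum_f_R0 f n.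
Proof. induction n; simpl; [ring| rewrite IHn; ring]. Qed.

Lemma sum_lin a b (f g : nat -> R) n :
  sum_f_R0 (fun i => a * f i + b * g i) n = a * sum_f_R0 f n + b * sum_f_R0 g n.
Proof. induction n; simpl; [ring| rewrite IHn; ring]. Qed.

Lemma sum_nonneg (f : nat -> R) n : (forall i, (i <= n)%nat -> 0 <= f i) -> 0 <= sum_f_R0 f n.
Proof.
  intros H; induction n; simpl. apply H; lia.
  apply Rplus_le_le_0_compat; [apply IHn; intros; apply H; lia| apply H; lia].
Qed.

Lemma sum_swap (F : nat -> nat -> R) n m :
  sum_f_R0 (fun i => sum_f_R0 (fun l => F i l) m) n =
  sum_f_R0 (fun l => sum_f_R0 (fun i => F i l) n) m.
Proof.
  induction n as [|n IH]; simpl.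
  - reflexivity.
  - rewrite IH, <- plus_sum. reflexivity.
Qed.

Lemma dsum_prod (u v : nat -> R) n m :
  sum_f_R0 (fun i => sum_f_R0 (fun l => u i * v l) m) n = sum_f_R0 u n * sum_f_R0 v m.
Proof.
  induction n; simpl; rewrite sum_mult_l; [ring| rewrite IHn; ring].
Qed.

Lemma sum_triangle (F : nat -> nat -> R) K :
  sum_f_R0 (fun n => sum_f_R0 (fun i => F i (n - i)%nat) n) K =
  sum_f_R0 (fun i => sum_f_R0 (fun l => F i l) (K - i)) K.
Proof.
  induction K as [|K IH].
  - reflexivity.
  - rewrite tech5, IH, tech5.
    rewrite (tech5 (fun i => sum_f_R0 (fun l => F i l) (S K - i))).
    replace (S K - S K)%nat with 0%nat by lia. simpl (sum_f_R0 _ 0).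
    rewrite (sum_eq (fun i => sum_f_R0 (fun l => F i l) (S K - i))
       (fun i => sum_f_R0 (fun l => F i l) (K - i) + F i (S K - i)%nat)).
    + rewrite plus_sum. ring.
    + intros i Hi. replace (S K - i)%nat with (S (K - i)) by lia.
      rewrite tech5. reflexivity.
Qed.

Lemma sum_indic (t K : nat) (v : nat -> R) : (t <= K)%nat ->
  sum_f_R0 (fun i => if Nat.eqb t i then v i else 0) K = v t.
Proof.
  intros H; induction K as [|K IH].
  - assert (t = 0%nat) by lia; subst; simpl; reflexivity.
  - destruct (Nat.eq_dec t (S K)) as [->|Hne].
    + rewrite tech5, Nat.eqb_refl, sum_zero; [ring|].
      intros i Hi. replace (Nat.eqb (S K) i) with false; [reflexivity|]. symmetry; apply Nat.eqb_neq; lia.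
    + rewrite tech5, IH by lia. destruct (Nat.eqb_spec t (S K)); [lia|ring].
Qed.
Definition supp (f : nat -> R) (K : nat) := forall i, (K < i)%nat -> f i = 0.

Lemma conv_supp f g Kf Kg : supp f Kf -> supp g Kg -> supp (conv f g) (Kf + Kg).
Proof.
  intros Hf Hg n Hn. unfold conv. apply sum_zero. intros i Hi.
  destruct (Nat.le_gt_cases i Kf).
  - rewrite (Hg (n - i)%nat) by lia. ring.
  - rewrite Hf by lia. ring.
Qed.

Lemma conv_nonneg f g : (forall i, 0 <= f i) -> (forall i, 0 <= g i) -> forall n, 0 <= conv f g n.
Proof.
  intros Hf Hg n. unfold conv. apply sum_nonneg. intros. apply Rmult_le_pos; auto.
Qed.

Lemma conv_mom h f g Kf Kg : supp f Kf -> supp g Kg ->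
  sum_f_R0 (fun n => h n * conv f g n) (Kf + Kg) =
  sum_f_R0 (fun i => sum_f_R0 (fun l => h (i + l)%nat * f i * g l) Kg) Kf.
Proof.
  intros Hf Hg.
  set (F := fun i l => h (i + l)%nat * f i * g l).
  rewrite (sum_eq _ (fun n => sum_f_R0 (fun i => F i (n - i)%nat) n)).
  2:{ intros n _. unfold conv. rewrite <- sum_mult_l. apply sum_eq.
      intros i Hi. unfold F. replace (i + (n - i))%nat with n by lia. ring. }
  rewrite sum_triangle.
  rewrite (sum_eq _ (fun i => sum_f_R0 (fun l => F i l) Kg)).
  2:{ intros i Hi. destruct (Nat.le_gt_cases i Kf).
      - apply sum_supp; [|lia]. intros l Hl. unfold F. rewrite Hg by lia. ring.
      - rewrite !sum_zero; auto; intros l _; unfold F; rewrite Hf by lia; ring. }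
  apply sum_supp; [|lia]. intros i Hi. apply sum_zero. intros l _. unfold F.
  rewrite Hf by lia; ring.
Qed.

Lemma dsum_plus (F G : nat -> nat -> R) n m :
  sum_f_R0 (fun i => sum_f_R0 (fun l => F i l + G i l) m) n =
  sum_f_R0 (fun i => sum_f_R0 (fun l => F i l) m) n + sum_f_R0 (fun i => sum_f_R0 (fun l => G i l) m) n.
Proof.
  rewrite <- plus_sum. apply sum_eq. intros; apply plus_sum.
Qed.

Lemma dsum_ext (F G : nat -> nat -> R) n m : (forall i l, F i l = G i l) ->
  sum_f_R0 (fun i => sum_f_R0 (fun l => F i l) m) n = sum_f_R0 (fun i => sum_f_R0 (fun l => G i l) m) n.
Proof. intros H. apply sum_eq; intros; apply sum_eq; intros; apply H. Qed.

Definition m0 f K := sum_f_R0 f K.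
Definition m1 f K := sum_f_R0 (fun i => INR i * f i) K.
Definition m2 f K := sum_f_R0 (fun i => INR i ^ 2 * f i) K.

Lemma conv_m0 f g Kf Kg : supp f Kf -> supp g Kg ->
  m0 (conv f g) (Kf + Kg) = m0 f Kf * m0 g Kg.
Proof.
  intros Hf Hg. unfold m0.
  rewrite (sum_eq _ (fun n => 1 * conv f g n)) by (intros; ring).
  rewrite conv_mom with (Kf:=Kf) (Kg:=Kg) by auto.
  rewrite <- dsum_prod. apply dsum_ext. intros; ring.
Qed.

Lemma conv_m1 f g Kf Kg : supp f Kf -> supp g Kg ->
  m1 (conv f g) (Kf + Kg) = m1 f Kf * m0 g Kg + m0 f Kf * m1 g Kg.
Proof.
  intros Hf Hg. unfold m0, m1.
  rewrite conv_mom with (Kf:=Kf) (Kg:=Kg) by auto.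
  rewrite <- !dsum_prod, <- dsum_plus. apply dsum_ext. intros; rewrite plus_INR; ring.
Qed.

Lemma conv_m2 f g Kf Kg : supp f Kf -> supp g Kg ->
  m2 (conv f g) (Kf + Kg) = m2 f Kf * m0 g Kg + 2 * (m1 f Kf * m1 g Kg) + m0 f Kf * m2 g Kg.
Proof.
  intros Hf Hg. unfold m0, m1, m2.
  rewrite conv_mom with (Kf:=Kf) (Kg:=Kg) by auto.
  rewrite <- !dsum_prod.
  match goal with |- _ = ?X + 2 * ?Y + ?Z => 
    assert (E : 2 * Y = sum_f_R0 (fun i => sum_f_R0 (fun l => 2 * ((INR i * f i) * (INR l * g l))) Kg) Kf) end.
  { rewrite <- sum_mult_l. apply sum_eq; intros i _. exact (eq_sym (sum_mult_l 2 _ _)). }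
  rewrite E.
  rewrite <- !dsum_plus. apply dsum_ext. intros; rewrite plus_INR; ring.
Qed.

Lemma convpow_all f K A B : supp f K -> m0 f K = 1 -> m1 f K = A -> m2 f K = B ->
  forall m, supp (convpow f m) (m * K) /\ m0 (convpow f m) (m * K) = 1 /\
    m1 (convpow f m) (m * K) = INR m * A /\
    m2 (convpow f m) (m * K) = INR m * B + INR m * (INR m - 1) * A ^ 2.
Proof.
  intros Hs H0 H1 H2 m. induction m as [|m [Ss [S0 [S1 S2]]]].
  - simpl. split; [|split; [|split]].
    + intros i Hi. destruct i; [lia|reflexivity].
    + unfold m0; simpl; reflexivity.
    + unfold m1; simpl; ring.
    + unfold m2; simpl; ring.
  - change (S m * K)%nat with (K + m * K)%nat. change (convpow f (S m)) with (conv f (convpow f m)).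
    split; [|split; [|split]].
    + apply conv_supp; auto.
    + rewrite conv_m0 by auto. rewrite H0, S0; ring.
    + rewrite conv_m1 by auto. rewrite H0, H1, S0, S1, S_INR; ring.
    + rewrite conv_m2 by auto. rewrite H0, H1, H2, S0, S1, S2, S_INR; ring.
Qed.

Lemma convpow_nonneg f : (forall i, 0 <= f i) -> forall m n, 0 <= convpow f m n.
Proof.
  intros Hf m; induction m; intros n; simpl.
  - destruct (n =? 0)%nat; lra.
  - apply conv_nonneg; auto.
Qed.
Lemma binom_0 n : binom n 0 = 1%nat.
Proof. destruct n; reflexivity. Qed.

Lemma binom_big n k : (n < k)%nat -> binom n k = 0%nat.
Proof.
  revert k; induction n; intros k Hk; destruct k; simpl; try lia; auto.
  rewrite !IHn by lia. reflexivity.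
Qed.

Definition prevb N p z := match z with O => 0 | S z' => binom_pmf N p z' end.

Lemma binom_pmf_S N p z : (z <= S N)%nat ->
  binom_pmf (S N) p z = p * prevb N p z + (1 - p) * binom_pmf N p z.
Proof.
  intros Hz. unfold binom_pmf, prevb. destruct z as [|z].
  - rewrite !binom_0. simpl. rewrite Nat.sub_0_r. ring.
  - simpl binom. rewrite plus_INR. simpl (S N - S z)%nat.
    destruct (Nat.eq_dec z N) as [->|Hne].
    + rewrite (binom_big N (S N)) by lia. simpl INR. rewrite Nat.sub_diag. unfold binom_pmf. rewrite Nat.sub_diag. simpl. ring.
    + unfold binom_pmf. replace (N - z)%nat with (S (N - S z)) by lia. simpl. ring.
Qed.

Definition bs (h : nat -> R) N p := sum_f_R0 (fun z => h z * binom_pmf N p z) N.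

Lemma bs_S h N p : bs h (S N) p = p * bs (fun z => h (S z)) N p + (1 - p) * bs h N p.
Proof.
  unfold bs.
  rewrite (sum_eq _ (fun z => p * (h z * prevb N p z) + (1 - p) * (h z * binom_pmf N p z))).
  2:{ intros z Hz. rewrite binom_pmf_S by auto. ring. }
  rewrite sum_lin. f_equal; f_equal.
  - rewrite decomp_sum by lia. simpl. ring.
  - rewrite tech5. unfold binom_pmf at 2. rewrite binom_big by lia. simpl. ring.
Qed.

Lemma bs_ext h1 h2 N p : (forall z, h1 z = h2 z) -> bs h1 N p = bs h2 N p.
Proof. intros H; unfold bs; apply sum_eq; intros; rewrite H; reflexivity. Qed.

Lemma bs_lin a b h1 h2 N p : bs (fun z => a * h1 z + b * h2 z) N p = a * bs h1 N p + b * bs h2 N p.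
Proof.
  unfold bs. rewrite <- sum_lin. apply sum_eq; intros; ring.
Qed.

Lemma bs_mom N p :
  bs (fun _ => 1) N p = 1 /\ bs INR N p = INR N * p /\
  bs (fun z => INR z ^ 2) N p = INR N * p * (1 - p) + (INR N * p) ^ 2.
Proof.
  induction N as [|N [I0 [I1 I2]]].
  - unfold bs, binom_pmf; simpl; split; [|split]; ring.
  - rewrite !bs_S.
    rewrite (bs_ext (fun z => 1) (fun z => 1 * 1 + 0 * INR z)) by (intros; ring).
    rewrite (bs_ext (fun z => INR (S z)) (fun z => 1 * INR z + 1 * 1)) by (intros; rewrite S_INR; ring).
    rewrite (bs_ext (fun z => INR (S z) ^ 2) (fun z => 1 * INR z ^ 2 + 1 * (2 * INR z + 1 * 1)))
       by (intros; rewrite S_INR; ring).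
    rewrite !bs_lin. rewrite I0, I1, I2, S_INR. split; [|split]; ring.
Qed.

Lemma binom_pmf_nonneg N p z : 0 <= p <= 1 -> 0 <= binom_pmf N p z.
Proof.
  intros Hp. unfold binom_pmf. apply Rmult_le_pos; [apply Rmult_le_pos|]; try apply pow_le; try lra.
  apply pos_INR.
Qed.
Lemma off_mom h a N p :
  sum_f_R0 (fun i => h i * offspring_pmf a N p i) (a * N) = bs (fun z => h (a * z)%nat) N p.
Proof.
  unfold offspring_pmf.
  rewrite (sum_eq _ (fun i => sum_f_R0 (fun z => if Nat.eqb (a * z) i then h i * binom_pmf N p z else 0) N)).
  2:{ intros i _. rewrite <- sum_mult_l. apply sum_eq. intros z _.
      destruct (Nat.eqb (a * z) i); ring. }
  rewrite (sum_swap (fun i z => if Nat.eqb (a * z) i then h i * binom_pmf N p z else 0)).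
  unfold bs. apply sum_eq. intros z Hz.
  apply (sum_indic (a * z) (a * N) (fun i => h i * binom_pmf N p z)). nia.
Qed.

Lemma off_supp a N p : supp (offspring_pmf a N p) (a * N).
Proof.
  intros i Hi. unfold offspring_pmf. apply sum_zero. intros z Hz.
  replace (Nat.eqb (a * z) i) with false; [reflexivity|]. symmetry; apply Nat.eqb_neq; nia.
Qed.

Lemma off_nonneg a N p : 0 <= p <= 1 -> forall i, 0 <= offspring_pmf a N p i.
Proof.
  intros Hp i. unfold offspring_pmf. apply sum_nonneg. intros z _.
  destruct (Nat.eqb (a * z) i); [apply binom_pmf_nonneg; auto| lra].
Qed.

Lemma off_moms a N p :
  m0 (offspring_pmf a N p) (a * N) = 1 /\
  m1 (offspring_pmf a N p) (a * N) = INR a * (INR N * p) /\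
  m2 (offspring_pmf a N p) (a * N) = INR a ^ 2 * (INR N * p * (1 - p) + (INR N * p) ^ 2).
Proof.
  destruct (bs_mom N p) as [I0 [I1 I2]].
  unfold m0, m1, m2. split; [|split].
  - rewrite (sum_eq _ (fun i => 1 * offspring_pmf a N p i)) by (intros; ring).
    rewrite off_mom. exact I0.
  - rewrite off_mom. rewrite (bs_ext _ (fun z => INR a * INR z + 0 * INR z)) by (intros; rewrite mult_INR; ring).
    rewrite bs_lin, I1. ring.
  - rewrite off_mom. rewrite (bs_ext _ (fun z => INR a ^ 2 * INR z ^ 2 + 0 * INR z)) by (intros; rewrite mult_INR; ring).
    rewrite bs_lin, I2. ring.
Qed.
Section GW.
Variables (a N : nat) (p : R).
Let K := (a * N)%nat.
Let off := offspring_pmf a N p.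
Let A := INR a * (INR N * p).
Let Bm := INR a ^ 2 * (INR N * p * (1 - p) + (INR N * p) ^ 2).

Lemma cp_all m : supp (convpow off m) (m * K) /\ m0 (convpow off m) (m * K) = 1 /\
    m1 (convpow off m) (m * K) = INR m * A /\
    m2 (convpow off m) (m * K) = INR m * Bm + INR m * (INR m - 1) * A ^ 2.
Proof.
  destruct (off_moms a N p) as [H0 [H1 H2]].
  apply convpow_all; auto. apply off_supp.
Qed.

Lemma gw_step h t :
  sum_f_R0 (fun n => h n * gw_gen a N p (S t) n) (K ^ (S t)) =
  sum_f_R0 (fun m => gw_gen a N p t m * sum_f_R0 (fun n => h n * convpow off m n) (m * K)) (K ^ t).
Proof.
  change (gw_gen a N p (S t)) with (fun n =>
      sum_f_R0 (fun m => gw_gen a N p t m * convpow (offspring_pmf a N p) m n) ((a * N) ^ t)).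
  cbv beta. fold K. fold off.
  rewrite (sum_eq _ (fun n => sum_f_R0 (fun m => gw_gen a N p t m * (h n * convpow off m n)) (K ^ t))).
  2:{ intros n _. rewrite <- sum_mult_l. apply sum_eq. intros; ring. }
  rewrite (sum_swap (fun n m => gw_gen a N p t m * (h n * convpow off m n))).
  apply sum_eq. intros m Hm. rewrite sum_mult_l. f_equal.
  apply sum_supp.
  - intros i Hi. destruct (cp_all m) as [Hs _]. rewrite Hs by auto. ring.
  - simpl. nia.
Qed.

Lemma gw_nonneg : 0 <= p <= 1 -> forall t n, 0 <= gw_gen a N p t n.
Proof.
  intros Hp t; induction t; intros n.
  - simpl. destruct (n =? 1)%nat; lra.
  - change (gw_gen a N p (S t) n) with
      (sum_f_R0 (fun m => gw_gen a N p t m * convpow (offspring_pmf a N p) m n) ((a * N) ^ t)).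
    apply sum_nonneg. intros. apply Rmult_le_pos; auto. apply convpow_nonneg. apply off_nonneg; auto.
Qed.

Lemma gw_m01 t : m0 (gw_gen a N p t) (K ^ t) = 1 /\ m1 (gw_gen a N p t) (K ^ t) = A ^ t.
Proof.
  induction t as [|t [I0 I1]].
  - unfold m0, m1. simpl. split; ring.
  - unfold m0, m1 in *. split.
    + rewrite (sum_eq _ (fun n => 1 * gw_gen a N p (S t) n)) by (intros; ring).
      rewrite gw_step.
      rewrite (sum_eq _ (fun m => gw_gen a N p t m)); [exact I0|].
      intros m _. destruct (cp_all m) as [_ [C0 _]]. unfold m0 in C0.
      rewrite (sum_eq _ (convpow off m)) by (intros; ring). rewrite C0; ring.
    + rewrite gw_step.
      rewrite (sum_eq _ (fun m => A * (INR m * gw_gen a N p t m) + 0 * 0)).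
      * rewrite sum_lin, I1. simpl. ring.
      * intros m _. destruct (cp_all m) as [_ [_ [C1 _]]]. unfold m1 in C1. rewrite C1; ring.
Qed.

Lemma gw_m2 t : m2 (gw_gen a N p (S t)) (K ^ (S t)) = (Bm - A ^ 2) * A ^ t + A ^ 2 * m2 (gw_gen a N p t) (K ^ t).
Proof.
  destruct (gw_m01 t) as [_ I1]. unfold m1, m2 in *. rewrite gw_step.
  rewrite (sum_eq _ (fun m => (Bm - A ^ 2) * (INR m * gw_gen a N p t m) + A ^ 2 * (INR m ^ 2 * gw_gen a N p t m))).
  - rewrite sum_lin, I1. ring.
  - intros m _. destruct (cp_all m) as [_ [_ [_ C2]]]. unfold m2 in C2. rewrite C2; ring.
Qed.
End GW.
Lemma div_le x S P : 0 < S -> x <= P * S -> x / S <= P.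
Proof.
  intros HS H. replace P with ((P * S) / S) by (field; lra).
  unfold Rdiv. apply Rmult_le_compat_r; [left; apply Rinv_0_lt_compat; lra| auto].
Qed.

Lemma amgm i t : 0 < t -> i <= t / 2 + / (2 * t) * i ^ 2.
Proof.
  intros Ht. assert (0 <= / (2 * t) * (i - t) ^ 2).
  { apply Rmult_le_pos; [left; apply Rinv_0_lt_compat; lra| apply pow2_ge_0]. }
  replace (t / 2 + / (2 * t) * i ^ 2) with (i + / (2 * t) * (i - t) ^ 2) by (field; lra). lra.
Qed.

Lemma pz g K y E S : (forall i, 0 <= g i) -> m0 g K = 1 -> m1 g K = E -> m2 g K = S ->
  0 <= y -> y < E -> 0 < S ->
  sum_f_R0 (fun i => if Rle_dec y (INR i) then g i else 0) K >= (E - y) ^ 2 / S.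
Proof.
  intros Hg H0 H1 H2 Hy HyE HS.
  set (D := E - y). set (t := S / D).
  assert (HD : 0 < D) by (unfold D; lra).
  assert (Ht : 0 < t) by (unfold t; apply Rdiv_lt_0_compat; lra).
  set (P := sum_f_R0 (fun i => if Rle_dec y (INR i) then g i else 0) K).
  assert (HE : E <= t / 2 * P + (/ (2 * t) * S + y * 1)).
  { rewrite <- H0, <- H1, <- H2. unfold m0, m1, m2, P.
    rewrite <- !sum_mult_l, <- !plus_sum. apply sum_Rle. intros i _.
    pose proof (Hg i) as Hgi.
    destruct (Rle_dec y (INR i)) as [Hle|Hlt].
    - pose proof (amgm (INR i) t Ht).
      assert (INR i * g i <= (t / 2 + / (2 * t) * INR i ^ 2) * g i) by (apply Rmult_le_compat_r; auto).
      nra.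
    - assert (0 <= / (2 * t) * (INR i ^ 2 * g i)).
      { apply Rmult_le_pos; [left; apply Rinv_0_lt_compat; lra| apply Rmult_le_pos; auto; apply pow2_ge_0]. }
      nra. }
  assert (Hs : / (2 * t) * S = D / 2) by (unfold t; field; lra).
  rewrite Hs in HE. apply Rle_ge, div_le; auto.
  assert (HDd : D = E - y) by reflexivity.
  assert (D <= t * P) by lra. unfold t in H.
  assert (D * D <= S / D * P * D) by (apply Rmult_le_compat_r; lra).
  replace (S / D * P * D) with (P * S) in H3 by (field; lra). lra.
Qed.

Lemma m1_le_m2 g K : (forall i, 0 <= g i) -> m1 g K <= m2 g K.
Proof.
  intros Hg. unfold m1, m2. apply sum_Rle. intros i _. apply Rmult_le_compat_r; auto.
  rewrite <- (Rmult_1_r (INR i)) at 1. simpl. destruct i; [simpl; lra|]. pose proof (pos_INR i). rewrite S_INR. nra.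
Qed.
Lemma gw_m2_bound a N p Bc : 
  let A := INR a * (INR N * p) in
  let Bm := INR a ^ 2 * (INR N * p * (1 - p) + (INR N * p) ^ 2) in
  Bm - A ^ 2 = Bc * A * (A - 1) -> 0 <= Bc -> 0 <= A ->
  forall t, m2 (gw_gen a N p t) ((a * N) ^ t) <= (A ^ t) ^ 2 * (1 + Bc) - Bc * A ^ t.
Proof.
  intros A Bm HB HBc HA t. induction t as [|t IH].
  - unfold m2; simpl. lra.
  - rewrite gw_m2. fold A Bm. rewrite HB.
    assert (0 <= A ^ 2) by apply pow2_ge_0.
    apply Rle_trans with (Bc * A * (A - 1) * A ^ t + A ^ 2 * ((A ^ t) ^ 2 * (1 + Bc) - Bc * A ^ t)).
    + apply Rplus_le_compat_l. apply Rmult_le_compat_l; auto.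
    + right. simpl. ring.
Qed.

Lemma core a N p x y : 0 <= p <= 1 -> (1 <= a)%nat ->
  let A := INR a * (INR N * p) in
  1 < A -> 0 <= y -> 2 * y <= A ^ x ->
  gw_tail a N p x y >= (A - 1) / (4 * (A - 1 + INR a)).
Proof.
  intros Hp Ha A HA Hy Hx.
  set (Bm := INR a ^ 2 * (INR N * p * (1 - p) + (INR N * p) ^ 2)).
  set (sig := INR a ^ 2 * (INR N * p * (1 - p))).
  assert (Hsig : Bm - A ^ 2 = sig) by (unfold Bm, sig, A; ring).
  assert (Hsig0 : 0 <= sig).
  { unfold sig. apply Rmult_le_pos; [apply pow2_ge_0|]. pose proof (pos_INR N). 
    apply Rmult_le_pos; [apply Rmult_le_pos|]; lra. }
  assert (Hsig1 : sig <= INR a * A).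
  { unfold sig, A. pose proof (pos_INR N). pose proof (pos_INR a).
    assert (0 <= INR N * p) by (apply Rmult_le_pos; lra).
    assert (0 <= INR a * INR a * (INR N * p)) by (apply Rmult_le_pos; [apply Rmult_le_pos|]; lra).
    nra. }
  set (Bc := sig / (A * (A - 1))).
  assert (HBc : Bm - A ^ 2 = Bc * A * (A - 1)) by (rewrite Hsig; unfold Bc; field; lra).
  assert (HBc0 : 0 <= Bc) by (unfold Bc; apply Rmult_le_pos; [lra| left; apply Rinv_0_lt_compat; nra]).
  assert (HBc1 : Bc <= INR a / (A - 1)).
  { unfold Bc. apply div_le; [nra|]. replace (INR a / (A - 1) * (A * (A - 1))) with (INR a * A) by (field; lra). lra. }
  assert (HA0 : 0 <= A) by lra.
  pose proof (gw_m2_bound a N p Bc HBc HBc0 HA0 x) as HS. fold A in HS.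
  destruct (gw_m01 a N p x) as [H0 H1]. fold A in H1.
  pose proof (gw_nonneg a N p Hp x) as Hg.
  pose proof (m1_le_m2 _ ((a * N) ^ x) Hg) as H12.
  assert (HAx : 0 < A ^ x) by (apply pow_lt; lra).
  pose proof (pz _ _ y (A ^ x) (m2 (gw_gen a N p x) ((a * N) ^ x)) Hg H0 H1 eq_refl Hy ltac:(lra) ltac:(lra)) as HP.
  unfold gw_tail. apply Rge_trans with (1 := HP). apply Rle_ge.
  set (E := A ^ x) in *. set (S := m2 _ _) in *.
  assert (HSpos : 0 < S) by lra.
  assert (HSb : S <= E ^ 2 * (1 + Bc)) by nra.
  assert (L1 : (A - 1) / (4 * (A - 1 + INR a)) <= 1 / (4 * (1 + Bc))).
  { assert (0 < INR a) by (apply lt_0_INR; lia).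
    unfold Rdiv. rewrite Rmult_1_l.
    apply Rle_trans with (/ (4 * (1 + INR a / (A - 1)))).
    - right. field. split; lra.
    - apply Rinv_le_contravar; lra. }
  apply Rle_trans with (1 := L1).
  unfold Rdiv. rewrite Rmult_1_l.
  apply Rle_trans with ((E / 2) ^ 2 / (E ^ 2 * (1 + Bc))).
  - right. field. split; lra.
  - unfold Rdiv. apply Rle_trans with ((E/2)^2 * / S).
    + apply Rmult_le_compat_l; [apply pow2_ge_0|]. apply Rinv_le_contravar; auto.
    + apply Rmult_le_compat_r; [left; apply Rinv_0_lt_compat; auto|].
      assert (0 <= E / 2 <= E - y) by (unfold Rdiv; lra). nra.
Qed.
Lemma binom_1 n : binom n 1 = n.
Proof. induction n; simpl; [reflexivity| rewrite binom_0, IHn; reflexivity]. Qed.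

Lemma binom_pos n d : (d <= n)%nat -> (1 <= binom n d)%nat.
Proof.
  revert d; induction n; intros d Hd.
  - assert (d = 0%nat) by lia; subst; simpl; lia.
  - destruct d; [rewrite binom_0; lia|]. simpl. specialize (IHn d ltac:(lia)). lia.
Qed.

Lemma binom_ge n d : (1 <= d)%nat -> (d < n)%nat -> (n <= binom n d)%nat.
Proof.
  revert d; induction n; intros d H1 H2; [lia|].
  destruct d; [lia|]. simpl. destruct d.
  - rewrite binom_0, binom_1. lia.
  - specialize (IHn (S d) ltac:(lia) ltac:(lia)). pose proof (binom_pos n (S (S d)) ltac:(lia)). lia.
Qed.

Lemma int_part_nat r : 0 <= r ->
  INR (Z.to_nat (Int_part r)) = IZR (Int_part r) /\ r - 1 < IZR (Int_part r) <= r.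
Proof.
  intros Hr. destruct (base_Int_part r) as [B1 B2].
  assert (HZ : (0 <= Int_part r)%Z).
  { assert (IZR (-1) < IZR (Int_part r)) by (simpl; lra). apply lt_IZR in H. lia. }
  split; [|lra]. rewrite INR_IZR_INZ, Z2Nat.id; auto.
Qed.

Lemma lim0_ev u e : is_lim_seq u 0 -> 0 < e -> exists N, forall n, (N <= n)%nat -> Rabs (u n) < e.
Proof.
  intros H He. apply is_lim_seq_spec in H. destruct (H (mkposreal e He)) as [N HN].
  exists N. intros n Hn. specialize (HN n Hn). simpl in HN. rewrite Rminus_0_r in HN. exact HN.
Qed.

Lemma liminf_ev u M : is_lim_seq u p_infty -> exists N, forall n, (N <= n)%nat -> M < u n.
Proof.
  intros H. apply is_lim_seq_spec in H. destruct (H M) as [N HN]. exists N. exact HN.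
Qed.

Lemma ln_big M : exists N, forall n, (N <= n)%nat -> M <= ln (INR n) /\ 0 < INR n.
Proof.
  destruct (archimed (exp M)) as [A1 _].
  pose proof (exp_pos M).
  exists (Z.to_nat (up (exp M))). intros n Hn.
  assert (HZ : (0 <= up (exp M))%Z) by (apply le_IZR; simpl; lra).
  apply le_INR in Hn. rewrite INR_IZR_INZ, Z2Nat.id in Hn by auto.
  split; [|lra].
  rewrite <- (ln_exp M). apply ln_le; lra.
Qed.
Lemma exp_le x y : x <= y -> exp x <= exp y.
Proof. intros [H|H]; [left; apply exp_increasing; auto| right; subst; auto]. Qed.

Lemma ln_ge A : 0 < A -> 1 - / A <= ln A.
Proof.
  intros HA. pose proof (exp_ineq1_le (- ln A)). rewrite exp_Ropp, exp_ln in H by auto. lra.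
Qed.

Lemma frac_le x y z w : 0 < y -> 0 < w -> x * w <= z * y -> x / y <= z / w.
Proof.
  intros Hy Hw H. apply div_le; auto.
  replace (z / w * y) with (z * y / w) by (field; lra).
  unfold Rdiv. apply Rmult_le_reg_r with w; auto.
  replace (z * y * / w * w) with (z * y) by (field; lra). lra.
Qed.

Theorem lemma7p3 (j k : nat) (delta c : R) (eps epsS : nat -> R) :
  (1 <= j)%nat -> (j < k)%nat ->
  0 < delta < 1 / 6 -> 0 < c ->
  (forall n, 0 < eps n) -> (forall n, 0 < epsS n) ->
  is_lim_seq eps 0 ->
  is_lim_seq (fun n => eps n ^ 3 * INR n ^ j) p_infty ->
  is_lim_seq (fun n => eps n ^ 2 * Rpower (INR n) (1 - 2 * delta)) p_infty ->
  is_lim_seq (fun n => Rpower (INR n) (- / 2 + delta) / epsS n) 0 ->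
  is_lim_seq (fun n => epsS n / eps n) 0 ->
  exists n0 : nat, forall n : nat, (n0 <= n)%nat ->
    let a := (binom k j - 1)%nat in
    let p0 := / (INR a * INR (binom n (k - j))) in
    let p := (1 + eps n) * p0 in
    let N := Z.to_nat (Int_part ((1 - epsS n) * INR (binom n (k - j)))) in
    let x := Z.to_nat (Int_part ((INR j - 1 + delta + c) / eps n * ln (INR n))) in
    gw_tail a N p x (Rpower (INR n) (INR j - 1 + delta))
      >= eps n / Rpower (INR n) c.
Proof.
  intros Hj Hjk Hd Hc Heps HepsS L0 _ L2 _ L5.
  set (L := INR j - 1 + delta + c).
  assert (HL : c < L) by (unfold L; apply le_INR in Hj; simpl in Hj; lra).
  set (th := c / (4 * L)).
  assert (Hth0 : 0 < th) by (unfold th; apply Rdiv_lt_0_compat; lra).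
  assert (Hth1 : th < 1 / 4).
  { unfold th. apply Rmult_lt_reg_r with (4 * L); [lra|]. unfold Rdiv. 
    replace (c * / (4 * L) * (4 * L)) with c by (field; lra). lra. }
  assert (HLth : L * th = c / 4) by (unfold th; field; lra).
  assert (Ha : (1 <= binom k j - 1)%nat).
  { pose proof (binom_ge k j Hj Hjk). lia. }
  set (M := 1 / L + (2 + 2 * Rabs (ln 2)) / c + 8 * (1 + INR (binom k j - 1)) / c).
  destruct (lim0_ev eps (Rmin (1 / 2) th) L0 ltac:(apply Rmin_glb_lt; lra)) as [N1 H1].
  destruct (lim0_ev _ (th / 4) L5 ltac:(lra)) as [N2 H2].
  destruct (liminf_ev _ (4 / th) L2) as [N3 H3].
  destruct (ln_big M) as [N4 H4].
  exists (N1 + N2 + N3 + N4 + k + 2)%nat. intros n Hn.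
  specialize (H1 n ltac:(lia)). specialize (H2 n ltac:(lia)).
  specialize (H3 n ltac:(lia)). specialize (H4 n ltac:(lia)).
  intros a p0 p N x.
  set (e := eps n) in *. set (es := epsS n) in *.
  assert (He0 : 0 < e) by apply Heps. assert (Hes0 : 0 < es) by apply HepsS.
  rewrite Rabs_pos_eq in H1 by lra.
  assert (He1 : e < 1 / 2) by (pose proof (Rmin_l (1/2) th); lra).
  assert (He2 : e < th) by (pose proof (Rmin_r (1/2) th); lra).
  rewrite Rabs_pos_eq in H2 by (apply Rlt_le, Rdiv_lt_0_compat; lra).
  assert (Hes : es < th * e / 4).
  { apply Rmult_lt_compat_r with (r := e) in H2; auto.
    replace (es / e * e) with es in H2 by (field; lra). lra. }
  destruct H4 as [Hlnn Hn0].
  assert (HM1 : 1 / L <= M).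
  { unfold M. assert (0 <= (2 + 2 * Rabs (ln 2)) / c).
    { apply Rlt_le, Rdiv_lt_0_compat; [pose proof (Rabs_pos (ln 2)); lra | lra]. }
    assert (0 <= 8 * (1 + INR (binom k j - 1)) / c).
    { apply Rlt_le, Rdiv_lt_0_compat; [pose proof (pos_INR (binom k j - 1)); lra | lra]. }
    lra. }
  assert (HM2 : (2 + 2 * Rabs (ln 2)) / c <= M).
  { unfold M. assert (0 <= 1 / L) by (apply Rlt_le, Rdiv_lt_0_compat; lra).
    assert (0 <= 8 * (1 + INR (binom k j - 1)) / c).
    { apply Rlt_le, Rdiv_lt_0_compat; [pose proof (pos_INR (binom k j - 1)); lra | lra]. }
    lra. }
  assert (HM3 : 8 * (1 + INR (binom k j - 1)) / c <= M).
  { unfold M. assert (0 <= 1 / L) by (apply Rlt_le, Rdiv_lt_0_compat; lra).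
    assert (0 <= (2 + 2 * Rabs (ln 2)) / c).
    { apply Rlt_le, Rdiv_lt_0_compat; [pose proof (Rabs_pos (ln 2)); lra | lra]. }
    lra. }
  assert (Hn2 : 2 <= INR n) by (replace 2 with (INR 2) by (simpl; ring); apply le_INR; lia).
  set (C := binom n (k - j)) in *.
  assert (HC : INR n <= INR C) by (apply le_INR; unfold C; apply binom_ge; lia).
  assert (Hne : 4 / th <= INR n * e).
  { assert (Rpower (INR n) (1 - 2 * delta) <= INR n).
    { rewrite <- (Rpower_1 (INR n)) at 2 by lra. apply Rle_Rpower; lra. }
    assert (0 <= Rpower (INR n) (1 - 2 * delta)) by (unfold Rpower; left; apply exp_pos).
    assert (e ^ 2 * Rpower (INR n) (1 - 2 * delta) <= e ^ 2 * INR n) by (apply Rmult_le_compat_l; nra).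
    assert (e ^ 2 * INR n <= e * INR n) by (apply Rmult_le_compat_r; nra).
    lra. }
  assert (HrC : / INR C <= th * e / 4).
  { apply Rle_trans with (/ INR n); [apply Rinv_le_contravar; lra|].
    replace (/ INR n) with (1 / INR n) by (field; lra).
    apply div_le; [lra|].
    apply Rmult_le_compat_r with (r := th / 4) in Hne; [|lra].
    replace (4 / th * (th / 4)) with 1 in Hne by (field; lra). lra. }
  destruct (int_part_nat ((1 - es) * INR C) ltac:(apply Rmult_le_pos; nra)) as [HN [HN1 HN2]].
  fold N in HN. rewrite <- HN in HN1, HN2.
  assert (Ha1 : 1 <= INR a) by (apply (le_INR 1); exact Ha).
  assert (HpE : p = (1 + e) / (INR a * INR C)) by (unfold p, p0; field; lra).
  assert (Hp : 0 <= p <= 1).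
  { rewrite HpE. split; [apply Rlt_le, Rdiv_lt_0_compat; nra|].
    apply div_le; nra. }
  set (A := INR a * (INR N * p)).
  assert (HAE : A = INR N * (1 + e) * / INR C) by (unfold A; rewrite HpE; field; lra).
  assert (HCr : INR C * / INR C = 1) by (field; lra).
  assert (HrC0 : 0 < / INR C) by (apply Rinv_0_lt_compat; lra).
  assert (HNr1 : INR N * / INR C <= 1 - es).
  { apply Rmult_le_compat_r with (r := / INR C) in HN2; [|lra]. nra. }
  assert (HNr2 : 1 - es - / INR C <= INR N * / INR C).
  { apply Rlt_le in HN1. apply Rmult_le_compat_r with (r := / INR C) in HN1; [|lra]. nra. }
  assert (HAu : A <= 1 + e) by (rewrite HAE; nra).
  assert (HAl : 1 + e - th * e <= A).
  { rewrite HAE. assert (1 - th * e / 2 <= INR N * / INR C) by lra. nra. }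
  assert (HA1 : 1 < A) by nra.
  set (X := L / e * ln (INR n)).
  assert (HlnM : 1 / L <= ln (INR n)) by lra.
  assert (HX1 : 1 <= X).
  { unfold X. assert (L * ln (INR n) >= 1).
    { assert (L * (1 / L) = 1) by (field; lra). nra. }
    assert (1 / e > 1) by (apply Rlt_gt; unfold Rdiv; rewrite Rmult_1_l; 
      rewrite <- Rinv_1; apply Rinv_lt_contravar; lra).
    replace (L / e * ln (INR n)) with (L * ln (INR n) * (1 / e)) by (field; lra). nra. }
  destruct (int_part_nat X ltac:(lra)) as [HX [HX1' HX2']].
  change (Z.to_nat (Int_part X)) with x in *. rewrite <- HX in HX1', HX2'.
  assert (HlnA : e * (1 - 2 * th) <= ln A).
  { apply Rle_trans with (1 - / A); [|apply ln_ge; lra].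
    assert (A - 1 >= e * (1 - 2 * th) * A) by nra.
    assert (1 - / A = (A - 1) / A) by (field; lra). rewrite H0.
    apply Rge_le. apply Rle_ge. unfold Rdiv. apply Rmult_le_reg_r with A; [lra|].
    replace ((A - 1) * / A * A) with (A - 1) by (field; lra). lra. }
  assert (HXe : X * e = L * ln (INR n)) by (unfold X; field; lra).
  assert (Hxln : ln 2 + (L - c) * ln (INR n) <= INR x * ln A).
  { assert (HlnA0 : 0 <= ln A) by nra.
    assert (INR x * ln A >= (X - 1) * ln A) by (apply Rle_ge, Rmult_le_compat_r; lra).
    assert ((X - 1) * ln A >= (X - 1) * (e * (1 - 2 * th))) by (apply Rle_ge, Rmult_le_compat_l; lra).
    assert (Hc2 : (2 + 2 * Rabs (ln 2)) / c <= ln (INR n)) by lra.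
    assert (Hc3 : 2 + 2 * Rabs (ln 2) <= c * ln (INR n)).
    { apply Rmult_le_compat_l with (r := c) in Hc2; [|lra].
      replace (c * ((2 + 2 * Rabs (ln 2)) / c)) with (2 + 2 * Rabs (ln 2)) in Hc2 by (field; lra). lra. }
    pose proof (Rle_abs (ln 2)).
    assert ((X - 1) * (e * (1 - 2 * th)) = L * ln (INR n) - 2 * th * (L * ln (INR n)) - e * (1 - 2 * th))
      by (rewrite <- HXe; ring).
    assert (th * (L * ln (INR n)) = c / 4 * ln (INR n)) by (rewrite <- HLth; ring).
    assert (e * (1 - 2 * th) <= 1) by nra.
    lra. }
  assert (Hy : 2 * Rpower (INR n) (INR j - 1 + delta) <= A ^ x).
  { rewrite <- Rpower_pow by lra. unfold Rpower.
    replace 2 with (exp (ln 2)) at 1 by (apply exp_ln; lra).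
    rewrite <- exp_plus. apply exp_le.
    replace (INR j - 1 + delta) with (L - c) by (unfold L; ring). lra. }
  assert (Hy0 : 0 <= Rpower (INR n) (INR j - 1 + delta)) by (unfold Rpower; left; apply exp_pos).
  pose proof (core a N p x _ Hp Ha HA1 Hy0 Hy) as Hcore. fold A in Hcore.
  apply Rge_trans with (1 := Hcore). apply Rle_ge.
  assert (HR : 8 * (1 + INR a) <= Rpower (INR n) c).
  { unfold Rpower. apply Rle_trans with (1 + c * ln (INR n)); [|apply exp_ineq1_le].
    assert (Hc4 : 8 * (1 + INR a) / c <= ln (INR n)) by (unfold a; lra).
    apply Rmult_le_compat_l with (r := c) in Hc4; [|lra].
    replace (c * (8 * (1 + INR a) / c)) with (8 * (1 + INR a)) in Hc4 by (field; lra). lra. }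
  apply frac_le; [lra|lra|].
  assert (A - 1 >= e / 2) by nra.
  nra.
Qed.
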